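(* Let $J$ be a countable set and $\mathcal{A}$ the non-unital algebra of finitely supported functions $J\to\mathbb{R}$ with pointwise operations. Let $\sigma:J\to J$ be a bijection and $\tilde{\sigma}(f)=f\circ\sigma^{-1}$. The center of the skew polynomial ring $\mathcal{A}[x,\tilde{\sigma},0]$ is $$Z(\mathcal{A}[x,\tilde{\sigma},0])=\Big\{\sum_{k=0}^m f_kx^k : f_k\in\mathcal{A},\ f_k=0\text{ on } Sep^k(J)\text{ and }\tilde{\sigma}(f_k)=f_k\text{ for all }k\Big\}.$$
   Context: $\mathcal{A}[x,\tilde{\sigma},0]$ is the set of formal sums $\sum_{k=0}^m f_kx^k$ with $f_k\in\mathcal{A}$, with coefficientwise addition and multiplication the bilinear extension of $(fx^k)(gx^l)=f\,\tilde{\sigma}^k(g)\,x^{k+l}$. For an integer $k$, $Sep^k(J)=\{p\in J:\sigma^k(p)\neq p\}$ (so $Sep^0(J)=\emptyset$). *)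

(* Defs.v *)
From Stdlib Require Import Reals List.
Open Scope R_scope.

Definition fin_supp {J : Type} (f : J -> R) : Prop :=
  exists s : list J, forall j, f j <> 0 -> In j s.

(* An element sum_{k} f_k x^k of A[x, sigma~, 0] is encoded as its coefficient
   sequence p : nat -> (J -> R): every coefficient lies in A (finitely
   supported) and only finitely many coefficients are nonzero. *)
Definition skew_poly {J : Type} (p : nat -> J -> R) : Prop :=
  (forall k, fin_supp (p k)) /\
  exists m : nat, forall k, (m < k)%nat -> forall j, p k j = 0.

(* sigma~^k (g) = g o sigma^{-k}, where sinv is the inverse of sigma. *)
Definition sigma_tilde_pow {J : Type} (sinv : J -> J) (k : nat) (g : J -> R)
  : J -> R := fun j => g (Nat.iter k sinv j).

(* Product: (f x^k)(g x^l) = f sigma~^k(g) x^{k+l}, extended bilinearly: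
   coefficient n of p*q is sum_{k=0}^n p_k * sigma~^k(q_{n-k}). *)
Definition skew_mul {J : Type} (sinv : J -> J) (p q : nat -> J -> R)
  (n : nat) (j : J) : R :=
  sum_f_R0 (fun k => p k j * sigma_tilde_pow sinv k (q (n - k)%nat) j) n.

Definition Sep {J : Type} (sigma : J -> J) (k : nat) (j : J) : Prop :=
  Nat.iter k sigma j <> j.

Definition in_center {J : Type} (sinv : J -> J) (p : nat -> J -> R) : Prop :=
  skew_poly p /\
  forall q, skew_poly q -> forall n j, skew_mul sinv p q n j = skew_mul sinv q p n j.

(* Main.v *)
Require Import Defs.
From Stdlib Require Import Reals List Lia Lra ClassicalEpsilon.
Open Scope R_scope.

Lemma sum_first (g : nat -> R) n :
  sum_f_R0 g (S n) = g 0%nat + sum_f_R0 (fun k => g (S k)) n.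
Proof.
  induction n; simpl in *. reflexivity. rewrite IHn. ring.
Qed.

Lemma sum_rev (n : nat) : forall f : nat -> R,
  sum_f_R0 f n = sum_f_R0 (fun k => f (n - k)%nat) n.
Proof.
  induction n; intro f. reflexivity.
  rewrite (sum_first (fun k => f (S n - k)%nat)). replace (S n - 0)%nat with (S n) by lia.
  simpl (sum_f_R0 f (S n)). rewrite (IHn f).
  rewrite Rplus_comm; reflexivity.
Qed.

Lemma sum_single (f : nat -> R) i n :
  (forall k, (k <= n)%nat -> k <> i -> f k = 0) -> (i <= n)%nat -> sum_f_R0 f n = f i.
Proof.
  revert i. induction n; intros i H Hi.
  - simpl. replace i with 0%nat by lia. reflexivity.
  - simpl. destruct (Nat.eq_dec i (S n)).
    + subst. rewrite (sum_eq _ (fun _ => 0)). rewrite sum_cte. ring.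
      intros; apply H; lia.
    + rewrite (IHn i); [| intros; apply H; lia | lia]. rewrite (H (S n)) by lia. ring.
Qed.


Lemma iter_cancel {J} (f g : J -> J) (H : forall j, g (f j) = j) k j :
  Nat.iter k g (Nat.iter k f j) = j.
Proof.
  revert j; induction k; intro j. reflexivity.
  rewrite Nat.iter_succ_r. simpl (Nat.iter (S k) f j). rewrite H. apply IHk.
Qed.

Definition ind {J} (j0 : J) (d : nat) : nat -> J -> R :=
  fun k j => if excluded_middle_informative (k = d /\ j = j0) then 1 else 0.

Lemma ind_poly {J} (j0 : J) d : skew_poly (ind j0 d).
Proof.
  split.
  - intro k. exists (j0 :: nil). intros j Hj. unfold ind in Hj.
    destruct excluded_middle_informative as [[_ ->]|]; [left; auto| congruence].
  - exists d. intros k Hk j. unfold ind.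
    destruct excluded_middle_informative as [[-> _]|]; [lia|auto].
Qed.

Theorem theorem9 (J : Type)
  (countJ : exists e : J -> nat, forall a b, e a = e b -> a = b)
  (sigma sinv : J -> J)
  (Hs1 : forall j, sinv (sigma j) = j) (Hs2 : forall j, sigma (sinv j) = j)
  (p : nat -> J -> R) :
  in_center sinv p <->
  (skew_poly p /\
   forall k : nat,
     (forall j, Sep sigma k j -> p k j = 0) /\
     (forall j, sigma_tilde_pow sinv 1 (p k) j = p k j)).
Proof.
  assert (Hfix : forall k j, Nat.iter k sigma j = j <-> Nat.iter k sinv j = j).
  { intros k j; split; intro E.
    - rewrite <- E at 1. apply iter_cancel; auto.
    - rewrite <- E at 1. apply iter_cancel; auto. }
  split.
  - intros [Hp Hc]. split; [exact Hp|].
    assert (A : forall n j, Nat.iter n sinv j <> j -> p n j = 0).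
    { intros n j Hn.
      pose proof (Hc (ind (Nat.iter n sinv j) 0) (ind_poly _ _) n j) as E.
      unfold skew_mul, sigma_tilde_pow in E.
      rewrite (sum_single _ n) in E.
      2:{ intros k Hk1 Hk; unfold ind; destruct excluded_middle_informative as [[]|]; [lia|ring]. }
      2: lia.
      rewrite (sum_single _ 0) in E.
      2:{ intros k Hk1 Hk; unfold ind; destruct excluded_middle_informative as [[]|]; [lia|ring]. }
      2: lia.
      unfold ind in E. simpl in E.
      destruct excluded_middle_informative as [|C]; [|exfalso; apply C; split; auto; lia].
      destruct excluded_middle_informative as [[_ C]|]; [exfalso; apply Hn; auto|].
      replace (n - n)%nat with 0%nat in E by lia. lra. }
    intro n; split.
    + intros j Hj. apply A. intro E. apply Hj. apply Hfix; auto.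
    + intro j. unfold sigma_tilde_pow. simpl.
      pose proof (Hc (ind j 1) (ind_poly _ _) (S n) j) as E.
      unfold skew_mul, sigma_tilde_pow in E.
      rewrite (sum_single _ n) in E.
      2:{ intros k Hk1 Hk; unfold ind; destruct excluded_middle_informative as [[]|]; [lia|ring]. }
      2: lia.
      rewrite (sum_single _ 1) in E.
      2:{ intros k Hk1 Hk; unfold ind; destruct excluded_middle_informative as [[]|]; [lia|ring]. }
      2: lia.
      unfold ind in E. simpl in E.
      replace (S n - n)%nat with 1%nat in E by lia.
      replace (n - 0)%nat with n in E by lia.
      destruct (excluded_middle_informative (1%nat = 1%nat /\ j = j)) as [_|C];
        [|exfalso; apply C; auto].
      destruct excluded_middle_informative as [[_ F]|C].
      * lra.
      * assert (Z : p n j = 0). { apply A. intro F. apply C. split; [clear; destruct n as [|m]; [reflexivity|rewrite Nat.sub_succ_l by lia; rewrite Nat.sub_diag; reflexivity]|exact F]. } rewrite Z in E |- *. lra.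
  - intros [Hp H]. split; [exact Hp|]. intros q Hq n j.
    assert (Inv : forall k i j, Nat.iter i sinv j = j \/ True -> p k (Nat.iter i sinv j) = p k j).
    { intros k i j0 _. induction i. reflexivity.
      simpl. rewrite <- IHi. pose proof (proj2 (H k) (Nat.iter i sinv j0)) as E.
      unfold sigma_tilde_pow in E. simpl in E. exact E. }
    unfold skew_mul, sigma_tilde_pow.
    rewrite (sum_rev n (fun k => q k j * _)).
    apply sum_eq. intros k Hk.
    rewrite Inv by auto. replace (n - (n - k))%nat with k by lia.
    destruct (classic (Nat.iter k sigma j = j)) as [E|E].
    + apply Hfix in E. rewrite E. ring.
    + rewrite (proj1 (H k) j E). ring.
Qed.
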